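(* Let $a,d$ be real numbers and let $A_{n,k}(a,d)$ be the general Eulerian numbers defined below. Then for every integer $n\ge 1$ and every positive integer $i$, $$(a+(i-1)d)^n=\sum_{j=-1}^{n-1}A_{n,j}(a,d)\binom{i+j}{n}.$$
   Context: For real numbers $a,d$, the general Eulerian numbers $A_{n,k}(a,d)$ (integers $n\ge 0$, $k$) are defined by $A_{0,-1}(a,d)=1$, $A_{n,k}(a,d)=0$ whenever $k\ge n$ or $k\le -2$ (in particular $A_{0,k}=0$ for $k\neq -1$), and for $n\ge 1$, $-1\le k\le n-1$: $$A_{n,k}(a,d)=(-a+(k+2)d)A_{n-1,k}(a,d)+(a+(n-k-1)d)A_{n-1,k-1}(a,d).$$ For a nonnegative integer $x$ and $n\ge 0$, $\binom{x}{n}=x(x-1)\cdots(x-n+1)/n!$ (so it is $0$ when $x<n$). *)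

(* Defs.v *)
From mathcomp Require Import all_boot all_order all_algebra.
From mathcomp Require Import reals.
Set Implicit Arguments. Unset Strict Implicit. Unset Printing Implicit Defensive.
Import Order.TTheory GRing.Theory Num.Theory.
Local Open Scope ring_scope.

Fixpoint genEuler (R : realType) (a d : R) (n : nat) (k : int) {struct n} : R :=
  match n with
  | 0%N => if k == (-1)%R then 1 else 0
  | n'.+1 =>
      if ((-1)%R <= k) && (k <= (n'%:Z)) then
        (- a + (k + 2)%:~R * d) * genEuler a d n' k
        + (a + (n'%:Z - k)%:~R * d) * genEuler a d n' (k - 1)
      else 0
  end.

(* Main.v *)
Require Import Defs.
From mathcomp Require Import all_boot all_order all_algebra.
From mathcomp Require Import reals.
From mathcomp Require Import ring zify.
Import Order.TTheory GRing.Theory Num.Theory.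
Local Open Scope ring_scope.

Lemma binR1 (R : realType) (N n : nat) :
  (n.+1)%:R * ('C(N, n.+1))%:R = (N%:R - n%:R) * ('C(N, n))%:R :> R.
Proof.
rewrite -natrM mul_bin_left natrM.
case: (ltnP N n) => h.
  by rewrite bin_small // !mulr0.
by rewrite natrB.
Qed.

Lemma binR2 (R : realType) (N n : nat) :
  (n.+1)%:R * ('C(N.+1, n.+1))%:R = (N%:R + 1) * ('C(N, n))%:R :> R.
Proof.
by rewrite -natrM -mul_bin_diag natrM -natr1.
Qed.

Lemma key (R : realType) (a d : R) (n i m : nat) : (1 <= i)%N ->
  (a + (i%:R - 1) * d) * ('C(i + m - 1, n))%:R =
  (- a + (m%:R + 1) * d) * ('C(i + m - 1, n.+1))%:R
  + (a + (n%:R - m%:R) * d) * ('C(i + m, n.+1))%:R.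
Proof.
move=> hi.
have hn : (n.+1)%:R != 0 :> R by rewrite pnatr_eq0.
apply: (mulfI hn).
case: i hi => // i' _.
rewrite addSn subn1 /=.
have eNR : (i' + m)%:R = i'.+1%:R + m%:R - 1 :> R.
  by rewrite -natr1 natrD; ring.
rewrite mulrDr !mulrA ![_ * (- a + _)]mulrC ![_ * (a + (_ - _) * _)]mulrC.
rewrite -!mulrA binR1 binR2 eNR -natr1.
ring.
Qed.

Lemma genE_out (R : realType) (a d : R) (n : nat) (k : int) :
  ((n%:Z <= k) || (k < -1)) -> genEuler a d n k = 0.
Proof.
case: n => [|n] /= h.
  by case: eqP h => // ->.
case: ifP => // /andP [h1 h2].
case/orP: h => h.
  have : (n.+1%:Z <= n%:Z) by apply: le_trans h h2.
  by rewrite lez_nat ltnn.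
by move: (lt_le_trans h h1); rewrite ltxx.
Qed.

Lemma genE_in (R : realType) (a d : R) (n m : nat) : (m <= n.+1)%N ->
  genEuler a d n.+1 (m%:Z - 1) =
  (- a + (m%:R + 1) * d) * genEuler a d n (m%:Z - 1)
  + (a + (n%:R - m%:R + 1) * d) * genEuler a d n (m%:Z - 1 - 1).
Proof.
move=> hm /=.
have -> : ((-1) <= m%:Z - 1) && (m%:Z - 1 <= n%:Z).
  apply/andP; split; first by rewrite lerBrDr addNr.
  rewrite lerBlDr; lia.
congr (_ * _ + _ * _).
  by rewrite (_ : m%:Z - 1 + 2 = m%:Z + 1); [rewrite intrD | lia].
by rewrite (_ : n%:Z - (m%:Z - 1) = n%:Z - m%:Z + 1); [rewrite intrD intrB | lia].
Qed.

Theorem lemma2p3 (R : realType) (a d : R) (n i : nat) :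
  (1 <= n)%N -> (1 <= i)%N ->
  (a + (i%:R - 1) * d) ^+ n =
  \sum_(m < n.+1) genEuler a d n (m%:Z - 1) * ('C(i + m - 1, n))%:R.
Proof.
move=> _ hi.
elim: n => [|n IH].
  rewrite big_ord_recl big_ord0 /= addr0 bin0 mulr1 expr0.
  by [].
rewrite exprS IH mulr_sumr.
under eq_bigr => j _ do rewrite mulrCA key // mulrDr.
rewrite big_split.
under [in RHS]eq_bigr => j _ do rewrite (@genE_in R a d n j (ltn_ord j)) mulrDl.
rewrite big_split.
congr (_ + _).
  rewrite [RHS]big_ord_recr /=.
  rewrite (@genE_out R a d n (n.+1%:Z - 1)); last by lia.
  rewrite mulr0 mul0r addr0.
  by apply: eq_bigr => j _; rewrite mulrCA mulrA.
rewrite [RHS]big_ord_recl /=.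
rewrite (@genE_out R a d n (0%:Z - 1 - 1)); last by lia.
rewrite mulr0 mul0r add0r.
apply: eq_bigr => j _ /=.
rewrite /bump /= add1n (_ : (j.+1)%:Z - 1 - 1 = j%:Z - 1); last by lia.
rewrite addnS subn1 /= -natr1 opprD addrA subrK.
by rewrite mulrCA mulrA.
Qed.
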